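(* Let $U$ be a VLA-J-SS. Then $U$ satisfies the half Jacobi identity if and only if it satisfies the half associator formula: for all homogeneous $u,v,w\in U$ and all $k,n\in\mathbb{N}$, $$(u_kv)_nw=\sum_{i\ge0}(-1)^i\binom{k}{i}\big(u_{k-i}(v_{n+i}w)-\varepsilon_{u,v}(-1)^kv_{n+k-i}(u_iw)\big).$$
   Context: All spaces over $\mathbb{C}$; $\mathbb{N}=\{0,1,2,\dots\}$; $\varepsilon_{u,v}=(-1)^{|u||v|}$. A VLA-J-SS is a $\mathbb{Z}_2$-graded space $U$ with an even linear operator $D$ and bilinear products $u_nv$ ($n\in\mathbb{N}$) such that for homogeneous $u,v$: $u_nv=0$ for $n$ large; $(Du)_nv=-nu_{n-1}v$ (read as $0$ for $n=0$); $D(u_nv)=(Du)_nv+u_n(Dv)$; $|u_nv|=|u|+|v|$. The half Jacobi identity is: for all homogeneous $u,v,w\in U$ and all $k,m,n\in\mathbb{N}$, $\sum_{i\ge0}(-1)^i\binom{k}{i}(u_{m+k-i}(v_{n+i}w)-\varepsilon_{u,v}(-1)^kv_{n+k-i}(u_{m+i}w))=\sum_{i\ge0}\binom{m}{i}(u_{k+i}v)_{m+n-i}w$. *)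

(* Defs.v *)
From mathcomp Require Import all_boot all_algebra.
From mathcomp Require Import reals.
From mathcomp Require Export complex.
Set Implicit Arguments. Unset Strict Implicit. Unset Printing Implicit Defensive.
Import GRing.Theory.
Local Open Scope ring_scope.

Section VLA.
Variables (R : realType) (U : lmodType R[i]).

Definition subspace (P : U -> Prop) : Prop :=
  P 0 /\ forall (a : R[i]) x y, P x -> P y -> P (a *: x + y).

Definition Z2grading (P0 P1 : U -> Prop) : Prop :=
  [/\ subspace P0, subspace P1,
      (forall u, P0 u -> P1 u -> u = 0) &
      (forall u, exists u0 u1, [/\ P0 u0, P1 u1 & u = u0 + u1])].

(* u is homogeneous of parity p (false = even, true = odd) *)
Definition homog (P0 P1 : U -> Prop) (p : bool) (u : U) : Prop :=
  if p then P1 u else P0 u.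

Definition eps (p q : bool) : R[i] := (-1) ^+ (p && q).

(* (U, grading P0/P1, D, products mu n u v = u_n v) is a VLA-J-SS *)
Definition is_VLAJSS (P0 P1 : U -> Prop) (D : U -> U)
    (mu : nat -> U -> U -> U) : Prop :=
  Z2grading P0 P1 /\
  [/\
      (forall (a : R[i]) x y, D (a *: x + y) = a *: D x + D y),
      (forall p u, homog P0 P1 p u -> homog P0 P1 p (D u)),
      (forall n (a : R[i]) x y z, mu n (a *: x + y) z = a *: mu n x z + mu n y z),
      (forall n (a : R[i]) x y z, mu n z (a *: x + y) = a *: mu n z x + mu n z y) &
      (forall p q u v, homog P0 P1 p u -> homog P0 P1 q v ->
        [/\ (exists N, forall n, (N <= n)%N -> mu n u v = 0),
            (forall n, mu n (D u) v = - (n%:R *: mu n.-1 u v)),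
            (forall n, D (mu n u v) = mu n (D u) v + mu n u (D v)) &
            (forall n, homog P0 P1 (p (+) q) (mu n u v))])].

Definition half_jacobi (P0 P1 : U -> Prop) (mu : nat -> U -> U -> U) : Prop :=
  forall (p q r : bool) (u v w : U) (k m n : nat),
    homog P0 P1 p u -> homog P0 P1 q v -> homog P0 P1 r w ->
    \sum_(i < k.+1) (((-1) ^+ i * ('C(k, i))%:R) *:
        (mu (m + k - i)%N u (mu (n + i)%N v w)
         - (eps p q * (-1) ^+ k) *: mu (n + k - i)%N v (mu (m + i)%N u w)))
    = \sum_(i < m.+1) (('C(m, i))%:R *: mu (m + n - i)%N (mu (k + i)%N u v) w).

Definition half_associator (P0 P1 : U -> Prop) (mu : nat -> U -> U -> U) : Prop :=
  forall (p q r : bool) (u v w : U) (k n : nat),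
    homog P0 P1 p u -> homog P0 P1 q v -> homog P0 P1 r w ->
    mu n (mu k u v) w =
    \sum_(i < k.+1) (((-1) ^+ i * ('C(k, i))%:R) *:
        (mu (k - i)%N u (mu (n + i)%N v w)
         - (eps p q * (-1) ^+ k) *: mu (n + k - i)%N v (mu i u w))).

End VLA.

(* Main.v *)
Require Import Defs.
From mathcomp Require Import all_boot all_algebra.
From mathcomp Require Import reals complex.
Set Implicit Arguments. Unset Strict Implicit.
Import GRing.Theory.
Section Gen.
Local Open Scope ring_scope.
Variables (K : nzRingType) (V : lmodType K).
Definition Ssum (f : nat -> nat -> V) k m n :=
  \sum_(i < k.+1) (((-1) ^+ i * ('C(k, i))%:R) *: f (m + k - i)%N (n + i)%N).
Lemma S_rec f k m n : Ssum f k.+1 m n = Ssum f k m.+1 n - Ssum f k m n.+1.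
Proof.
rewrite /Ssum big_ord_recl.
under eq_bigr => i _ do rewrite lift0 binS natrD mulrDr scalerDl.
rewrite big_split /= big_ord_recr /= (bin_small (ltnSn k)) mulr0n mulr0 scale0r addr0.
rewrite [in RHS]big_ord_recl -addrA; congr (_ + _).
  by rewrite !bin0 !subn0 addnS addSn.
rewrite -sumrN; congr (_ + _); apply: eq_bigr => i _.
  by rewrite lift0 /= addnS addSn subSS.
by rewrite exprS mulN1r mulNr scaleNr addnS subSS addnS addSn.
Qed.
Definition Qsum (h : nat -> nat -> V) m k n :=
  \sum_(i < m.+1) (('C(m, i))%:R *: h (m + n - i)%N (k + i)%N).
Lemma Q_rec h m k n : Qsum h m.+1 k n = Qsum h m k n.+1 + Qsum h m k.+1 n.
Proof.
rewrite /Qsum big_ord_recl.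
under eq_bigr => i _ do rewrite lift0 binS natrD scalerDl.
rewrite big_split /= big_ord_recr /= (bin_small (ltnSn m)) scale0r addr0.
rewrite [in RHS]big_ord_recl -addrA; congr (_ + _).
  by rewrite !bin0 !subn0 addnS addSn.
congr (_ + _); apply: eq_bigr => i _.
  by rewrite lift0 /= addnS addSn subSS addnS.
by rewrite addSn subSS addnS addSn.
Qed.
Lemma S_rec' f k m n : Ssum f k m.+1 n = Ssum f k.+1 m n + Ssum f k m n.+1.
Proof. by rewrite S_rec subrK. Qed.
Lemma S_rec'' f k m n : Ssum f k m n.+1 = Ssum f k m.+1 n - Ssum f k.+1 m n.
Proof. by rewrite S_rec opprB addrC subrK. Qed.
End Gen.

Local Open Scope ring_scope.
Theorem lemma6p2 (R : realType) (U : lmodType R[i]) (P0 P1 : U -> Prop)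
    (D : U -> U) (mu : nat -> U -> U -> U) :
  is_VLAJSS P0 P1 D mu ->
  (half_jacobi P0 P1 mu <-> half_associator P0 P1 mu).
Proof.
move=> _; split.
  move=> HJ p q r u v w k n hu hv hw.
  have := HJ p q r u v w k 0%N n hu hv hw.
  rewrite big_ord1 /= bin0 GRing.scale1r subn0 addn0 add0n => <-.
  by [].
move=> HA p q r u v w k m n hu hv hw.
pose fA := fun a b => mu a u (mu b v w).
pose fB := fun a b => mu a v (mu b u w).
pose h := fun a b => mu a (mu b u v) w.
pose c := fun k : nat => (eps R p q * (-1) ^+ k)%R.
have E : forall k m n, 
  \sum_(i < k.+1) ((((-1) ^+ i * ('C(k, i))%:R) *:
        (mu (m + k - i)%N u (mu (n + i)%N v w)
         - (eps R p q * (-1) ^+ k) *: mu (n + k - i)%N v (mu (m + i)%N u w))))%R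
  = (Ssum fA k m n - c k *: Ssum fB k n m)%R.
  move=> k' m' n'; rewrite /Ssum GRing.scaler_sumr -GRing.sumrB.
  apply: eq_bigr => i _; rewrite GRing.scalerBr; congr (_ - _).
  by rewrite !GRing.scalerA GRing.mulrC.
rewrite E; move: (Qsum h m k n) (erefl (Qsum h m k n)) => _ _.
suff: forall m k n, (Ssum fA k m n - c k *: Ssum fB k n m)%R = Qsum h m k n by apply.
elim=> [|m' IH] k' n'.
  rewrite -E /Qsum big_ord1 /= bin0 GRing.scale1r subn0 addn0 add0n.
  by rewrite /h !add0n (HA p q r u v w k' n' hu hv hw).
rewrite Q_rec -!IH S_rec' (S_rec'' fB k' n' m').
have -> : c k'.+1 = (- c k')%R by rewrite /c GRing.exprS GRing.mulN1r GRing.mulrN.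
rewrite GRing.scalerBr GRing.scaleNr GRing.opprK.
set A1 := Ssum fA _ _ _; set A2 := Ssum fA _ _ _.
set B2 := Ssum fB _ _ _; set B1 := Ssum fB _ _ _.
by rewrite GRing.opprB [RHS]GRing.addrACA [A2 + A1]GRing.addrC [- _ + _]GRing.addrC.
Qed.
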